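(* Let a domain $v$ be a triple $(\mu^{(v)}, f^{(v)}, g^{(v)})$ with $\mu^{(v)}$ a distribution on $\mathbb{R}^d$, $f^{(v)}:\mathbb{R}^d\to\mathbb{R}^{d'}$ and $g^{(v)}:\mathbb{R}^{d'}\to\mathcal{Y}$, and $h^{(v)}=g^{(v)}\circ f^{(v)}$. Let $u$ be the unseen domain and $s=1,\dots,S$ the seen domains. For $h=g\circ f$ define $R^{(v)}(h):=\mathbb{E}_{\bm{x}\sim\mu^{(v)}}[\ell(h(\bm{x}),h^{(v)}(\bm{x}))]$. Assume (i) $\ell$ is non-negative, symmetric, bounded by a finite positive number $L$, and satisfies the triangle inequality; and (ii) $f$ is invertible when restricted to the data manifold (the support of the input distributions). Then for all convex weights $\lambda^{(1)},\dots,\lambda^{(S)}$ (nonnegative, summing to one) and any such hypothesis $h=g\circ f$, \[ R^{(u)}(h)\le\sum_{s=1}^S\lambda^{(s)}R^{(s)}(h)+L\sum_{s=1}^S\lambda^{(s)}\|f_{\#}\mu^{(u)}-f_{\#}\mu^{(s)}\|_1+\sum_{s=1}^S\lambda^{(s)}\sigma^{(u,s)}, \] where $f_{\#}\mu^{(v)}$ is the pushforward of $\mu^{(v)}$ under $f$, $\|\cdot\|_1$ is the $L^1$ distance between densities, and $\sigma^{(u,s)}:=\min\{\mathbb{E}_{\bm{x}\sim\mu^{(u)}}[\ell(h^{(u)}(\bm{x}),h^{(s)}(\bm{x}))],\ \mathbb{E}_{\bm{x}\sim\mu^{(s)}}[\ell(h^{(u)}(\bm{x}),h^{(s)}(\b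m{x}))]\}$.
   Context: Domain generalization with $S$ seen domains and one unseen domain. *)

(* Defs.v *)
From HB Require Import structures.
From mathcomp Require Import all_boot all_order all_algebra.
From mathcomp Require Import all_classical all_reals all_analysis.
Set Implicit Arguments.
Unset Strict Implicit.
Unset Printing Implicit Defensive.
Import Order.TTheory GRing.Theory Num.Theory.
Local Open Scope classical_set_scope.
Local Open Scope ring_scope.

(* Euclidean space R^n is modelled as [n.-tuple R], equipped by
   MathComp-Analysis with the product (coordinate-generated) sigma-algebra. *)

Section defs.
Local Open Scope ereal_scope.
Context {R : realType}.

Definition is_density d (Z : measurableType d)
  (nu : {measure set Z -> \bar R}) (P : set Z -> \bar R) (p : Z -> R) : Prop :=
  [/\ (forall z, (0 <= p z)%R), measurable_fun [set: Z] p &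
      forall A, measurable A -> P A = \int[nu]_(z in A) (p z)%:E].

Definition L1dist d (Z : measurableType d)
  (nu : {measure set Z -> \bar R}) (p q : Z -> R) : \bar R :=
  \int[nu]_z (`|p z - q z|)%:E.

(* E_{x ~ mu}[ ell (a x) (b x) ] ;  R^{(v)}(h) = expl mu^{(v)} ell h h^{(v)}. *)
Definition expl d (X : measurableType d) (Y : Type)
  (mu : {measure set X -> \bar R}) (ell : Y -> Y -> R) (a b : X -> Y) : \bar R :=
  \int[mu]_x (ell (a x) (b x))%:E.

End defs.

(* Main.v *)
Require Import Defs.
From HB Require Import structures.
From mathcomp Require Import all_boot all_order all_algebra.
From mathcomp Require Import all_classical all_reals all_analysis.
From mathcomp Require Import measurable_realfun.
Import Order.TTheory GRing.Theory Num.Theory.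
Local Open Scope classical_set_scope.
Local Open Scope ring_scope.
Section dens.
Local Open Scope ereal_scope.
Context (R : realType) dX dZ (X : measurableType dX) (Z : measurableType dZ).
Variables (P : {measure set Z -> \bar R}).
Variables (nu : {measure set Z -> \bar R}) (p : Z -> R).
Hypothesis hp : is_density nu P p.

Import HBNNSimple.

Lemma dens_change (phi : Z -> \bar R) : (forall x, 0 <= phi x) ->
  measurable_fun [set: Z] phi ->
  \int[P]_z phi z = \int[nu]_z (phi z * (p z)%:E).
Proof.
case: hp => p0 mp pint.
move=> f0 mphi.
symmetry.
set E := [set: Z]; have mE : measurable E by exact: measurableT.
set g := fun z => (p z)%:E.
have mg : measurable_fun E g by exact/measurable_EFinP.
pose h := nnsfun_approx mE mphi.
have -> : \int[P]_(x in E) phi x =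
    lim (\int[P]_(x in E) (EFin \o h n) x @[n --> \oo]).
  have fE x : E x -> phi x = lim ((EFin \o h n) x @[n --> \oo]).
    by move=> Ex; apply/esym/cvg_lim => //; exact: cvg_nnsfun_approx.
  under eq_integral => x /[!inE] /fE -> //.
  apply: monotone_convergence => //.
  - move=> n; apply/measurable_EFinP.
    by apply: (measurable_funS measurableT) => //; exact/measurable_funP.
  - by move=> n x Ex //=; rewrite lee_fin.
  - by move=> x Ex a b ab; rewrite lee_fin; exact/lefP/nd_nnsfun_approx.
have -> : \int[nu]_(x in E) (phi \* g) x =
    lim (\int[nu]_(x in E) ((EFin \o h n) \* g) x @[n --> \oo]).
  have fg x : E x -> phi x * g x = lim (((EFin \o h n) \* g) x @[n --> \oo]).
    by move=> Ex; apply/esym/cvg_lim => //; apply: cvgeZr;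
      [by []|exact: cvg_nnsfun_approx].
  under eq_integral => x /[!inE] /fg -> //.
  apply: monotone_convergence => [//| | |].
  - move=> n; apply/emeasurable_funM; last exact: mg.
    apply/measurable_EFinP.
    by apply: (measurable_funS measurableT) => //; exact/measurable_funP.
  - by move=> n x Ex /=; rewrite mule_ge0 ?lee_fin.
  - by move=> x Ex a b ab/=; rewrite lee_wpmul2r ?lee_fin//; exact/lefP/nd_nnsfun_approx.
suff suf n : \int[nu]_(x in E) ((EFin \o h n) x * g x) =
    \int[P]_(x in E) (EFin \o h n) x.
  by under eq_fun do rewrite suf.
transitivity (\int[P]_(x in E)
   (\sum_(y \in range (h n)) (y * \1_(h n @^-1` [set y]) x)%:E)); last first.
  by apply: eq_integral => t tE; rewrite /= fimfunE -fsumEFin.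
have indich m r : measurable_fun E (fun x => (r * \1_(h m @^-1` [set r]) x)%:E).
  by apply: (measurable_comp measurableT) => //; exact: measurable_funM.
rewrite ge0_integral_fsum//; last by move=> m y Ey; exact: nnfun_muleindic_ge0.
transitivity (\int[nu]_(x in E) (\sum_(y \in range (h n))
    (y * \1_(h n @^-1` [set y]) x)%:E * g x)).
  under [RHS]eq_integral => x xE.
    rewrite -ge0_mule_fsuml => [|y]; last exact: nnfun_muleindic_ge0.
    rewrite fsumEFin // -(fimfunE _ x); over.
  by [].
rewrite ge0_integral_fsum//; last 2 first.
  - move=> y; apply: emeasurable_funM => //.
  - by move=> m y Ey; apply: mule_ge0; [exact: nnfun_muleindic_ge0|rewrite lee_fin].
apply: eq_fsbigr => r rhn.
under [RHS]eq_integral do rewrite EFinM.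
rewrite integralZl_indic_nnsfun => //.
under eq_integral do rewrite EFinM -muleA.
rewrite ge0_integralZl//.
- under eq_integral do rewrite muleC.
  rewrite (eq_integral (g \_ (h n @^-1` [set r]))); last first.
    by move=> x xE; rewrite epatch_indic.
  rewrite -integral_mkcondr integral_indic//.
  rewrite setIC pint//; apply: measurableI => //; exact: measurable_sfunP.
- apply: emeasurable_funM; first exact/measurable_EFinP.
  by [].
- by move=> t Et; rewrite mule_ge0 ?lee_fin.
- by move: rhn; rewrite inE => -[t _ <-]; rewrite lee_fin.
Qed.
End dens.
Section key.
Local Open Scope ereal_scope.
Context (R : realType) dX dZ (X : measurableType dX) (Z : measurableType dZ).

Lemma ae_int (mu : {measure set X -> \bar R}) (M : set X) (F G : X -> \bar R) :
  measurable M -> mu (~` M) = 0 ->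
  measurable_fun [set: X] F -> measurable_fun [set: X] G ->
  (forall x, M x -> F x = G x) -> \int[mu]_x F x = \int[mu]_x G x.
Proof.
move=> mM M0 mF mG FG; apply: ae_eq_integral => //.
exists (~` M); split => //; first exact: measurableC.
by move=> x /= nx Mx; apply: nx => _; exact: FG.
Qed.

Lemma key (mua mub : {measure set X -> \bar R}) (f : X -> Z)
  (mf : measurable_fun [set: X] f)
  (nu : {measure set Z -> \bar R}) (pa pb : Z -> R) (L : R) (phi : Z -> R) :
  is_density nu (pushforward mua f) pa ->
  is_density nu (pushforward mub f) pb ->
  measurable_fun [set: Z] phi -> (forall z, 0 <= phi z <= L)%R ->
  \int[mua]_x (phi (f x))%:E <=
  \int[mub]_x (phi (f x))%:E + L%:E * L1dist nu pa pb.
Proof.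
move=> ha hb mphi phiL.
have phi0 z : (0 <= phi z)%R by case/andP: (phiL z).
have L0 : (0 <= L)%R by case/andP: (phiL (f point)) => a b; exact: le_trans b.
have mphiE : measurable_fun [set: Z] (fun z => (phi z)%:E) by exact/measurable_EFinP.
have E1 (mu : {measure set X -> \bar R}) (p : Z -> R) :
    is_density nu (pushforward mu f) p ->
    \int[mu]_x (phi (f x))%:E = \int[nu]_z ((phi z)%:E * (p z)%:E).
  move=> hp.
  have := @ge0_integral_pushforward _ _ _ _ _ f mf mu setT (fun z => (phi z)%:E)
     measurableT mphiE (fun z _ => phi0 z).
  rewrite preimage_setT => <-.
  exact: (@dens_change R dZ Z (measure_function_pushforward__canonical__measure_function_Measure mu mf) nu p hp).
have [pa0 mpa _] := ha; have [pb0 mpb _] := hb.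
rewrite (E1 _ _ ha) (E1 _ _ hb) /L1dist.
have mab : measurable_fun [set: Z] (fun z => (`|pa z - pb z|)%:E).
  by apply/measurable_EFinP; exact: measurableT_comp (measurable_funB mpa mpb).
have mpp (p : Z -> R) : measurable_fun [set: Z] p ->
    measurable_fun [set: Z] (fun z => (phi z)%:E * (p z)%:E).
  by move=> mp; apply: emeasurable_funM => //; exact/measurable_EFinP.
rewrite -(ge0_integralZl nu measurableT mab) //.
have mLab : measurable_fun [set: Z] (fun z => L%:E * (`|pa z - pb z|)%:E).
  by apply: emeasurable_funM.
rewrite -(ge0_integralD nu measurableT (fun z _ => mule_ge0 (phi0 z : 0 <= (phi z)%:E) (pb0 z : 0 <= (pb z)%:E)) (mpp _ mpb) (fun z _ => mule_ge0 (L0 : 0 <= L%:E) (normr_ge0 _ : 0 <= (`|pa z - pb z|)%:E)) mLab).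
apply: ge0_le_integral => //.
- by move=> z _; rewrite mule_ge0 ?lee_fin.
- exact: mpp.
- by apply: emeasurable_funD; [exact: mpp| apply: emeasurable_funM].
move=> z _; rewrite -!EFinM -EFinD lee_fin.
have := phiL z; case/andP => _ pL.
have h1 : (phi z * pa z <= phi z * pb z + phi z * `|pa z - pb z|)%R.
  rewrite -mulrDr ler_wpM2l //.
  by rewrite -lerBlDl ler_norm.
apply: le_trans h1 _; rewrite lerD2l ler_wpM2r //.
Qed.
End key.
Section conv.
Local Open Scope ereal_scope.
Lemma conv_sum (R : realType) (S : nat) (lam : 'I_S -> R) (A : \bar R)
  (B D C : 'I_S -> \bar R) (L : R) :
  (forall s, (0 <= lam s)%R) -> (\sum_(s < S) lam s = 1)%R -> (0 <= L)%R ->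
  (forall s, 0 <= B s) -> (forall s, 0 <= D s) -> (forall s, 0 <= C s) ->
  (forall s, A <= B s + L%:E * D s + C s) ->
  A <= \sum_(s < S) (lam s)%:E * B s + L%:E * \sum_(s < S) (lam s)%:E * D s
       + \sum_(s < S) (lam s)%:E * C s.
Proof.
move=> lam0 lam1 L0 B0 D0 C0 h.
have -> : A = \sum_(s < S) (lam s)%:E * A.
  by rewrite -ge0_sume_distrl ?sumEFin ?lam1 ?mul1e // => s _; rewrite lee_fin.
rewrite ge0_sume_distrr; last by move=> s _; apply: mule_ge0; rewrite ?lee_fin.
rewrite -!big_split /=; apply: lee_sum => s _.
rewrite (muleCA L%:E) -ge0_muleDr //; last by apply: mule_ge0; rewrite ?lee_fin.
rewrite -ge0_muleDr //; last by apply: adde_ge0 => //; apply: mule_ge0; rewrite ?lee_fin.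
by apply: lee_wpmul2l; rewrite ?lee_fin.
Qed.
End conv.
Section helpers.
Local Open Scope ereal_scope.
Context (R : realType) d (X : measurableType d) dY (Y : measurableType dY)
  (ell : Y -> Y -> R).
Hypothesis ell0 : forall y y', (0 <= ell y y')%R.
Hypothesis mell : measurable_fun [set: Y * Y] (fun yy : Y * Y => ell yy.1 yy.2).

Lemma mexpl (a b : X -> Y) : measurable_fun [set: X] a -> measurable_fun [set: X] b ->
  measurable_fun [set: X] (fun x => (ell (a x) (b x))%:E).
Proof.
move=> ma mb; apply/measurable_EFinP.
exact: (measurableT_comp mell (measurable_fun_pair ma mb)).
Qed.

Lemma expl_ge0 (m : {measure set X -> \bar R}) (a b : X -> Y) : 0 <= expl m ell a b.
Proof. by apply: integral_ge0 => x _; rewrite lee_fin. Qed.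

Lemma expl_tri (m : {measure set X -> \bar R}) (a b c : X -> Y) :
  (forall y1 y2 y3, ell y1 y3 <= ell y1 y2 + ell y2 y3)%R ->
  measurable_fun [set: X] a -> measurable_fun [set: X] b -> measurable_fun [set: X] c ->
  expl m ell a c <= expl m ell a b + expl m ell b c.
Proof.
move=> ellT ma mb mc; rewrite /expl.
rewrite -(ge0_integralD m measurableT (fun x _ => ell0 _ _ : 0 <= (ell (a x) (b x))%:E) (mexpl _ _ ma mb) (fun x _ => ell0 _ _ : 0 <= (ell (b x) (c x))%:E) (mexpl _ _ mb mc)).
apply: ge0_le_integral => //.
- by move=> x _; rewrite lee_fin.
- exact: mexpl.
- by apply: emeasurable_funD; exact: mexpl.
- by move=> x _; rewrite -EFinD lee_fin.
Qed.
End helpers.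

Theorem lemma2 (R : realType) (dX dZ : nat) (dY : measure_display)
  (Y : measurableType dY) (ell : Y -> Y -> R) (L : R) (S : nat)
  (mu_u : probability (dX.-tuple R) R)
  (mu : 'I_S -> probability (dX.-tuple R) R)
  (f_u : dX.-tuple R -> dZ.-tuple R) (g_u : dZ.-tuple R -> Y)
  (fs : 'I_S -> dX.-tuple R -> dZ.-tuple R) (gs : 'I_S -> dZ.-tuple R -> Y)
  (f : dX.-tuple R -> dZ.-tuple R) (g : dZ.-tuple R -> Y)
  (nu : {measure set (dZ.-tuple R) -> \bar R})
  (p_u : dZ.-tuple R -> R) (p : 'I_S -> dZ.-tuple R -> R)
  (lam : 'I_S -> R) :
  (* (i) the loss *)
  0 < L ->
  (forall y y', 0 <= ell y y') ->
  (forall y y', ell y y' = ell y' y) ->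
  (forall y y', ell y y' <= L) ->
  (forall y1 y2 y3, ell y1 y3 <= ell y1 y2 + ell y2 y3) ->
  measurable_fun [set: Y * Y] (fun yy : Y * Y => ell yy.1 yy.2) ->
  (* measurability of all feature maps and classifiers *)
  measurable_fun [set: dX.-tuple R] f_u -> measurable_fun [set: dZ.-tuple R] g_u ->
  (forall s, measurable_fun [set: dX.-tuple R] (fs s)) ->
  (forall s, measurable_fun [set: dZ.-tuple R] (gs s)) ->
  measurable_fun [set: dX.-tuple R] f -> measurable_fun [set: dZ.-tuple R] g ->
  (* (ii) f is invertible on the data manifold M (full measure for all domains) *)
  (exists M : set (dX.-tuple R),
     [/\ measurable M, mu_u (~` M) = 0%E, (forall s, mu s (~` M) = 0%E) &
         exists finv : dZ.-tuple R -> dX.-tuple R,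
           measurable_fun [set: dZ.-tuple R] finv /\
           forall x, M x -> finv (f x) = x]) ->
  (* densities of the pushforwards f_# mu^{(v)} w.r.t. the reference measure nu *)
  is_density nu (pushforward mu_u f) p_u ->
  (forall s, is_density nu (pushforward (mu s) f) (p s)) ->
  (* convex weights *)
  (forall s, 0 <= lam s) -> \sum_(s < S) lam s = 1 ->
  (expl mu_u ell (g \o f) (g_u \o f_u) <=
     \sum_(s < S) (lam s)%:E * expl (mu s) ell (g \o f) (gs s \o fs s)
   + L%:E * \sum_(s < S) (lam s)%:E * L1dist nu p_u (p s)
   + \sum_(s < S) (lam s)%:E *
       Order.min (expl mu_u ell (g_u \o f_u) (gs s \o fs s))
                 (expl (mu s) ell (g_u \o f_u) (gs s \o fs s)))%E.
Proof.
move=> L0 ell0 ellC ellL ellT mell mfu mgu mfs mgs mf mg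
  [M [mM Mu Ms [finv [mfinv hfinv]]]] hpu hps lam0 lam1.
Local Open Scope ereal_scope.
have mh : measurable_fun [set: dX.-tuple R] (g \o f) by exact: measurableT_comp.
have mhu : measurable_fun [set: dX.-tuple R] (g_u \o f_u) by exact: measurableT_comp.
have mhs s : measurable_fun [set: dX.-tuple R] (gs s \o fs s) by exact: measurableT_comp.
have K (s : 'I_S) (c : dX.-tuple R -> Y) : measurable_fun [set: dX.-tuple R] c ->
    expl mu_u ell (g \o f) c <= expl (mu s) ell (g \o f) c + L%:E * L1dist nu p_u (p s).
  move=> mc.
  pose phi z := ell (g z) (c (finv z)).
  have mphi : measurable_fun [set: dZ.-tuple R] phi.
    exact: (measurableT_comp mell (measurable_fun_pair mg (measurableT_comp mc mfinv))).
  have e (m : probability (dX.-tuple R) R) : m (~` M) = 0 ->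
      expl m ell (g \o f) c = \int[m]_x (phi (f x))%:E.
    move=> m0; apply: (@ae_int _ _ _ m M _ _ mM m0).
    - exact: mexpl.
    - by apply/measurable_EFinP; exact: measurableT_comp.
    - by move=> x Mx; rewrite /phi hfinv.
  rewrite (e _ Mu) (e _ (Ms s)).
  apply: (@key _ _ _ _ _ mu_u (mu s) f mf nu p_u (p s) L phi hpu (hps s) mphi).
  by move=> z; rewrite ell0 ellL.
have step s : expl mu_u ell (g \o f) (g_u \o f_u) <=
    expl (mu s) ell (g \o f) (gs s \o fs s) + L%:E * L1dist nu p_u (p s) +
    Order.min (expl mu_u ell (g_u \o f_u) (gs s \o fs s))
              (expl (mu s) ell (g_u \o f_u) (gs s \o fs s)).
  have symE (m : {measure set _ -> \bar R}) a b : expl m ell a b = expl m ell b a.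
    by apply: eq_integral => x _; rewrite ellC.
  case: (leP (expl mu_u ell (g_u \o f_u) (gs s \o fs s))
              (expl (mu s) ell (g_u \o f_u) (gs s \o fs s))) => hmin.
  -
    apply: le_trans (@expl_tri _ _ _ _ _ ell ell0 mell mu_u _ _ _ ellT mh (mhs s) mhu) _.
    apply: leeD; [exact: K | by rewrite symE].
  -
    apply: le_trans (K s _ mhu) _.
    rewrite [X in _ <= X]addeAC; apply: leeD => //.
    rewrite [X in _ <= _ + X]symE.
    exact: (@expl_tri _ _ _ _ _ ell ell0 mell (mu s) _ _ _ ellT mh (mhs s) mhu).
apply: (@conv_sum R S lam _
  (fun s => expl (mu s) ell (g \o f) (gs s \o fs s))
  (fun s => L1dist nu p_u (p s))
  (fun s => Order.min (expl mu_u ell (g_u \o f_u) (gs s \o fs s))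
                 (expl (mu s) ell (g_u \o f_u) (gs s \o fs s))) L lam0 lam1 (ltW L0)) => // s.
- exact: expl_ge0.
- by apply: integral_ge0 => z _; rewrite lee_fin.
- by rewrite le_min !expl_ge0.
Qed.
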